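(* Suppose $(X,y)$ is orthogonal separable. Let $(W_1,w_2,\lambda)$ be a KKT point (B-subdifferential sense) of the non-convex max-margin problem, and suppose it contains two neurons $i_+,i_-$ with $w_{2,i_+}\ne0$, $w_{2,i_-}\ne0$ whose associated diagonal matrices $\hat D_{i_+},\hat D_{i_-}$ (as in the context) satisfy $$\hat D_{i_+}\ge\mathrm{diag}(\mathbb I(y=1)),\qquad\hat D_{i_-}\ge\mathrm{diag}(\mathbb I(y=-1)).$$ Then $\lambda$ is dual feasible, i.e. $\max_{u:\|u\|_2\le1}|\lambda^T(Xu)_+|\le1$.
   Context: Binary setting: $X\in\mathbb R^{N\times d}$ rows $x_n$, $y\in\{\pm1\}^N$, $Y=\mathrm{diag}(y)$. $(X,y)$ is orthogonal separable if $x_n^Tx_{n'}>0$ whenever $y_n=y_{n'}$ and $x_n^Tx_{n'}\le0$ whenever $y_n\ne y_{n'}$. Non-convex max-margin problem: $\min\frac12(\|W_1\|_F^2+\|w_2\|_2^2)$ s.t. $Y(XW_1)_+w_2\ge\mathbf 1$. KKT point (B-subdifferential): $Y\lambda\ge0$, primal feasibility, $\lambda_n(y_n(x_n^TW_1)_+w_2-1)=0$, $w_2=(XW_1)_+^T\lambda$, and for each $i$, $w_{1,i}=w_{2,i}X^T\hat D_i\lambda$ where $\hat D_i$ is diagonal with $(\hat D_i)_{nn}=1$ if $x_n^Tw_{1,i}>0$, $0$ if $x_n^Tw_{1,i}<0$, $\in\{0,1\}$ if $x_n^Tw_{1,i}=0$. Matrix inequalities between diagonal matrices are entrywise; $\mathbb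 I(y=1)$ is the $0/1$ indicator vector. *)

(* Defs.v *)
From mathcomp Require Import all_boot all_order all_algebra.
Set Implicit Arguments. Unset Strict Implicit. Unset Printing Implicit Defensive.
Import Order.TTheory GRing.Theory Num.Theory.
Local Open Scope ring_scope.

(* Data: X : 'M_(N,d) with rows x_n, labels y : 'I_N -> R (values +-1),
   first layer W1 : 'M_(d,m) with columns w_{1,i}, second layer w2 : 'I_m -> R,
   dual variable lam : 'I_N -> R. *)

Definition relu {R : realDomainType} (t : R) : R := Num.max t 0.

Definition xdot {R : nzRingType} {N d : nat} (X : 'M[R]_(N, d)) (n : 'I_N)
  (v : 'I_d -> R) : R := \sum_(k < d) X n k * v k.

Definition wcol {R : nzRingType} {d m : nat} (W1 : 'M[R]_(d, m)) (i : 'I_m)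
  : 'I_d -> R := fun k => W1 k i.

Definition is_label {R : nzRingType} {N : nat} (y : 'I_N -> R) : Prop :=
  forall n, y n = 1 \/ y n = -1.

Definition orthogonal_separable {R : realDomainType} {N d : nat}
  (X : 'M[R]_(N, d)) (y : 'I_N -> R) : Prop :=
  forall n n' : 'I_N,
    (y n = y n' -> 0 < \sum_(k < d) X n k * X n' k) /\
    (y n <> y n' -> \sum_(k < d) X n k * X n' k <= 0).

Definition netout {R : realDomainType} {N d m : nat} (X : 'M[R]_(N, d))
  (W1 : 'M[R]_(d, m)) (w2 : 'I_m -> R) (n : 'I_N) : R :=
  \sum_(i < m) relu (xdot X n (wcol W1 i)) * w2 i.

(* Diagonal matrix \hat D_i encoded by its diagonal D i : 'I_N -> bool
   ((\hat D_i)_{nn} = 1 iff D i n = true); consistency with the sign pattern. *)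
Definition Dhat_consistent {R : realDomainType} {N d m : nat}
  (X : 'M[R]_(N, d)) (W1 : 'M[R]_(d, m)) (D : 'I_m -> 'I_N -> bool) : Prop :=
  forall i n,
    (0 < xdot X n (wcol W1 i) -> D i n = true) /\
    (xdot X n (wcol W1 i) < 0 -> D i n = false).

(* KKT point in the B-subdifferential sense, with the matrices \hat D_i made
   explicit. *)
Definition KKT_B {R : realDomainType} {N d m : nat} (X : 'M[R]_(N, d))
  (y : 'I_N -> R) (W1 : 'M[R]_(d, m)) (w2 : 'I_m -> R) (lam : 'I_N -> R)
  (D : 'I_m -> 'I_N -> bool) : Prop :=
  (forall n, 0 <= y n * lam n) /\
  (forall n, 1 <= y n * netout X W1 w2 n) /\
  (forall n, lam n * (y n * netout X W1 w2 n - 1) = 0) /\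
  (forall i, w2 i = \sum_(n < N) relu (xdot X n (wcol W1 i)) * lam n) /\
  Dhat_consistent X W1 D /\
  (forall i k, W1 k i = w2 i * \sum_(n < N) X n k * ((D i n)%:R * lam n)).

Definition dual_feasible {R : rcfType} {N d : nat} (X : 'M[R]_(N, d))
  (lam : 'I_N -> R) : Prop :=
  forall u : 'I_d -> R, Num.sqrt (\sum_(k < d) u k ^+ 2) <= 1 ->
    `| \sum_(n < N) lam n * relu (xdot X n u) | <= 1.

(* Main.v *)
Require Import Defs.
From mathcomp Require Import all_boot all_order all_algebra.
From mathcomp Require Import ring lra.
Import Order.TTheory GRing.Theory Num.Theory.
Local Open Scope ring_scope.

Section Aux.
Variables (R : rcfType) (N d : nat) (X : 'M[R]_(N, d)).

Definition G (n n' : 'I_N) : R := \sum_(k < d) X n k * X n' k.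
Definition vc (c : 'I_N -> R) (k : 'I_d) : R := \sum_(n < N) c n * X n k.
Definition bil (c c' : 'I_N -> R) : R :=
  \sum_(n < N) \sum_(n' < N) c n * c' n' * G n n'.

Lemma bilE c c' : bil c c' = \sum_(k < d) vc c k * vc c' k.
Proof.
transitivity (\sum_(k < d) \sum_(n < N) \sum_(n' < N) c n * X n k * (c' n' * X n' k)); last first.
  apply: eq_bigr => k _; rewrite /vc big_distrl; apply: eq_bigr => n _.
  by rewrite big_distrr.
rewrite /bil [RHS]exchange_big; apply: eq_bigr => n _; rewrite [RHS]exchange_big.
apply: eq_bigr => n' _; rewrite /G big_distrr; apply: eq_bigr => k _ /=; ring.
Qed.

Lemma bil_sq c : 0 <= bil c c.
Proof. rewrite bilE; apply: sumr_ge0 => k _; rewrite -expr2; exact: sqr_ge0. Qed.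

Lemma Gsym n n' : G n n' = G n' n.
Proof. by apply: eq_bigr => k _; rewrite mulrC. Qed.

Lemma bil_sym c c' : bil c c' = bil c' c.
Proof.
rewrite /bil exchange_big; apply: eq_bigr => n _; apply: eq_bigr => n' _.
rewrite Gsym; ring.
Qed.

Lemma bilDl c c1 c2 c' : (forall n, c n = c1 n + c2 n) ->
  bil c c' = bil c1 c' + bil c2 c'.
Proof.
move=> H; rewrite /bil -big_split; apply: eq_bigr => n _.
rewrite -big_split; apply: eq_bigr => n' _ /=; rewrite H; ring.
Qed.

Lemma bilDr c c1 c2 c' : (forall n, c n = c1 n + c2 n) ->
  bil c' c = bil c' c1 + bil c' c2.
Proof. by move=> H; rewrite bil_sym (bilDl _ _ _ c' H) !(bil_sym c'). Qed.

Lemma bil_ge0 c c' : (forall n n', 0 <= c n * c' n' * G n n') -> 0 <= bil c c'.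
Proof. by move=> H; apply: sumr_ge0 => n _; apply: sumr_ge0 => n' _. Qed.

Lemma xdot_vc n e : xdot X n (vc e) = \sum_(n' < N) e n' * G n n'.
Proof.
rewrite /xdot /vc; under eq_bigr do rewrite big_distrr.
rewrite exchange_big; apply: eq_bigr => n' _; rewrite /G big_distrr.
apply: eq_bigr => k _ /=; ring.
Qed.

Lemma sum_s a e : \sum_(n < N) a n * (\sum_(n' < N) e n' * G n n') = bil a e.
Proof.
apply: eq_bigr => n _; rewrite big_distrr; apply: eq_bigr => n' _ /=; ring.
Qed.

Lemma xdot_u a u : \sum_(n < N) a n * xdot X n u = \sum_(k < d) vc a k * u k.
Proof.
rewrite /xdot /vc; under [RHS]eq_bigr do rewrite big_distrl.
rewrite [RHS]exchange_big; apply: eq_bigr => n _; rewrite big_distrr.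
apply: eq_bigr => k _ /=; ring.
Qed.

End Aux.
Arguments G {R N d}.
Arguments vc {R N d}.
Arguments bil {R N d}.
Arguments bilE {R N d}.
Arguments bil_sq {R N d}.
Arguments Gsym {R N d}.
Arguments bil_sym {R N d}.
Arguments bilDl {R N d}.
Arguments bilDr {R N d}.
Arguments bil_ge0 {R N d}.
Arguments xdot_vc {R N d}.
Arguments sum_s {R N d}.
Arguments xdot_u {R N d}.

Lemma one_neq_m1 (R : rcfType) : (1 : R) <> -1.
Proof. move=> h; have : (2 : R) = 0 by lra. by move/eqP; rewrite pnatr_eq0. Qed.

Lemma relu_pos (R : rcfType) (t : R) : 0 <= t -> relu t = t.
Proof. by move=> h; rewrite /relu maxEle; case: ifP => // h'; apply/le_anti; rewrite h h'. Qed.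

Lemma relu_neg (R : rcfType) (t : R) : t <= 0 -> relu t = 0.
Proof. by move=> h; rewrite /relu maxEle h. Qed.

Lemma relu_ge0 (R : rcfType) (t : R) : 0 <= relu t.
Proof. by rewrite /relu le_max lexx orbT. Qed.

Lemma relu_ge (R : rcfType) (t : R) : t <= relu t.
Proof. by rewrite /relu le_max lexx. Qed.

Lemma upper (R : rcfType) (N d : nat) (X : 'M[R]_(N, d)) (y lam : 'I_N -> R)
  (c : R) (w : 'I_d -> R) (E : 'I_N -> bool) :
  is_label y -> orthogonal_separable X y -> (forall n, 0 <= y n * lam n) ->
  c != 0 -> c = \sum_(n < N) relu (xdot X n w) * lam n ->
  (forall n, xdot X n w < 0 -> E n = false) ->
  (forall k, w k = c * \sum_(n < N) X n k * ((E n)%:R * lam n)) ->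
  (forall n, y n = 1 -> E n = true) ->
  forall u, \sum_(k < d) u k ^+ 2 <= 1 ->
  \sum_(n < N) lam n * relu (xdot X n u) <= 1.
Proof.
move=> Hlab Hos Hsg Hc Hw2 HE Hw HEp u Hu.
have h1 := @one_neq_m1 R.
have lpos n : y n = 1 -> 0 <= lam n by move=> h; have := Hsg n; rewrite h mul1r.
have lneg n : y n = -1 -> lam n <= 0.
  by move=> h; have := Hsg n; rewrite h mulN1r oppr_ge0.
have Gpos n n' : y n = y n' -> 0 < G X n n' by move=> h; case: (Hos n n') => /(_ h).
have Gneg n n' : y n <> y n' -> G X n n' <= 0 by move=> h; case: (Hos n n') => _ /(_ h).
set e := fun n => (E n)%:R * lam n.
have epos n : y n = 1 -> 0 <= e n by move=> h; rewrite /e mulr_ge0 ?ler0n ?lpos.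
have eneg n : y n = -1 -> e n <= 0 by move=> h; rewrite /e mulr_ge0_le0 ?ler0n ?lneg.
set s := fun n => \sum_(n' < N) e n' * G X n n'.
have xw n : xdot X n w = c * s n.
  rewrite /s /= -xdot_vc /xdot mulr_sumr; apply: eq_bigr => k _.
  rewrite Hw /vc mulrCA; congr (_ * (_ * _)); apply: eq_bigr => n' _; exact: mulrC.
have spos n : y n = 1 -> 0 <= s n.
  move=> hn; apply: sumr_ge0 => n' _; case: (Hlab n') => hn'.
    by rewrite mulr_ge0 ?epos // ltW // Gpos // hn hn'.
  by rewrite mulr_le0 ?eneg // Gneg // hn hn'.
have sneg n : y n = -1 -> s n <= 0.
  move=> hn; apply: sumr_le0 => n' _; case: (Hlab n') => hn'.
    by rewrite mulr_ge0_le0 ?epos // Gneg // hn hn' => /esym.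
  by rewrite mulr_le0_ge0 ?eneg // ltW // Gpos // hn hn'.
set al := fun n => if y n == 1 then lam n else 0.
set be := fun n => if y n == 1 then 0 else e n.
have eab n : e n = al n + be n.
  rewrite /al /be; case: eqP => h; last by rewrite add0r.
  by rewrite addr0 /e HEp // mul1r.
have bil_PM a b : (forall n, (y n = 1 -> 0 <= a n) /\ (y n = -1 -> a n = 0)) ->
   (forall n, (y n = -1 -> b n <= 0) /\ (y n = 1 -> b n = 0)) -> 0 <= bil X a b.
  move=> Ha Hb; apply: bil_ge0 => n n'.
  case: (Hlab n) => hn; last by rewrite (proj2 (Ha n)) // !mul0r.
  case: (Hlab n') => hn'; first by rewrite (proj2 (Hb n')) // mulr0 mul0r.
  by rewrite mulr_le0 ?mulr_ge0_le0 ?(proj1 (Ha n)) ?(proj1 (Hb n')) // Gneg // hn hn'.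
have bil_PP a b : (forall n, (y n = 1 -> 0 <= a n) /\ (y n = -1 -> a n = 0)) ->
   (forall n, (y n = 1 -> 0 <= b n) /\ (y n = -1 -> b n = 0)) -> 0 <= bil X a b.
  move=> Ha Hb; apply: bil_ge0 => n n'.
  case: (Hlab n) => hn; last by rewrite (proj2 (Ha n)) // !mul0r.
  case: (Hlab n') => hn'; last by rewrite (proj2 (Hb n')) // mulr0 mul0r.
  by rewrite mulr_ge0 ?mulr_ge0 ?(proj1 (Ha n)) ?(proj1 (Hb n')) // ltW // Gpos // hn hn'.
have alP n : (y n = 1 -> 0 <= al n) /\ (y n = -1 -> al n = 0).
  rewrite /al; split => h; first by rewrite h eqxx lpos.
  by rewrite h ifF //; apply/eqP => /esym.
have beM n : (y n = -1 -> be n <= 0) /\ (y n = 1 -> be n = 0).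
  rewrite /be; split => h; last by rewrite h eqxx.
  by rewrite h ifF ?eneg //; apply/eqP => /esym.
have Hab := bil_PM _ _ alP beM.
have Hba : 0 <= bil X be al by rewrite bil_sym.
have Hbb := bil_sq X be.
have Sal : \sum_(n < N) al n * s n = bil X al al + bil X al be.
  by rewrite sum_s (bilDr _ _ _ _ _ eab).
have Sbe : \sum_(n < N) be n * s n = bil X be al + bil X be be.
  by rewrite sum_s (bilDr _ _ _ _ _ eab).
have Haa : bil X al al <= 1.
  case: (ltgtP c 0) => hc; last by move: Hc; rewrite hc eqxx.
  - have : \sum_(n < N) al n * s n = 0.
      apply: big1 => n _; rewrite /al; case: eqP => h; last by rewrite mul0r.
      have hs : s n = 0.
        apply/le_anti; rewrite spos // andbT -(nmulr_rge0 _ hc) -xw leNgt.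
        by apply/negP => /HE; rewrite HEp.
      by rewrite hs mulr0.
    by rewrite Sal => H0; lra.
  - have : \sum_(n < N) al n * s n = 1.
      have : c * (\sum_(n < N) al n * s n - 1) = 0.
        rewrite mulrBr mulr1 mulr_sumr {2}Hw2; apply/eqP; rewrite subr_eq0; apply/eqP/eq_bigr => n _.
        rewrite xw /al; case: (Hlab n) => h.
          by rewrite h eqxx relu_pos ?mulr_ge0 ?spos ?ltW //; ring.
        rewrite h ifF; last by apply/eqP => /esym.
        by rewrite relu_neg ?mulr_ge0_le0 ?sneg ?ltW // !mul0r mulr0.
      by move/eqP; rewrite mulf_eq0 (negbTE Hc) /= subr_eq0 => /eqP.
    have : \sum_(n < N) be n * s n = 0.
      apply: big1 => n _; rewrite /be; case: eqP => h; first by rewrite mul0r.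
      have hn : y n = -1 by case: (Hlab n).
      rewrite /e; case hEn : (E n); last by rewrite !mul0r.
      have hs : s n = 0.
        apply/le_anti; rewrite sneg // /= -(pmulr_rge0 _ hc) -xw leNgt.
        by apply/negP => /HE; rewrite hEn.
      by rewrite hs mulr0.
    rewrite Sbe Sal (bil_sym X be al) => H0 H1; lra.
set ga := fun n => if (y n == 1) && (0 < xdot X n u) then lam n else 0.
set de := fun n => al n - ga n.
have gaP n : (y n = 1 -> 0 <= ga n) /\ (y n = -1 -> ga n = 0).
  rewrite /ga; split => h; first by case: ifP => // _; rewrite lpos.
  by rewrite h ifF //; apply/negbTE; rewrite negb_and; apply/orP; left; apply/eqP => /esym.
have deP n : (y n = 1 -> 0 <= de n) /\ (y n = -1 -> de n = 0).
  rewrite /de /al /ga; split => h.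
    rewrite h eqxx /=; case: ifP => _; first by rewrite subrr.
    by rewrite subr0 lpos.
  have hn : (y n == 1) = false by apply/negbTE/eqP => h'; apply: h1; rewrite -[LHS]h' h.
  by rewrite hn /= subrr.
have Hgg : bil X ga ga <= 1.
  have e1 n : al n = ga n + de n by rewrite /de addrC subrK.
  have := Haa; rewrite (bilDl _ _ _ _ _ e1) (bilDr _ _ _ _ _ e1) (bilDr _ _ _ _ _ e1).
  have := bil_PP _ _ gaP deP; have := bil_PP _ _ deP gaP; have := bil_sq X de; lra.
have St1 : \sum_(n < N) lam n * relu (xdot X n u) <= \sum_(n < N) ga n * xdot X n u.
  apply: ler_sum => n _; rewrite /ga; case: (Hlab n) => h.
    rewrite h eqxx /=; case: ifP => hp; first by rewrite relu_pos // ltW.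
    by rewrite relu_neg ?mul0r ?mulr0 // leNgt hp.
  rewrite h ifF; last by apply/negbTE; rewrite negb_and; apply/orP; left; apply/eqP => /esym.
  by rewrite mul0r mulr_le0_ge0 ?lneg ?relu_ge0.
have St2 : 2 * \sum_(k < d) vc X ga k * u k <= bil X ga ga + \sum_(k < d) u k ^+ 2.
  rewrite bilE mulr_sumr -big_split; apply: ler_sum => k _ /=.
  have := sqr_ge0 (vc X ga k - u k); rewrite !expr2; nra.
rewrite xdot_u in St1; lra.
Qed.

Theorem proposition4 (R : rcfType) (N d m : nat) (X : 'M[R]_(N, d))
  (y : 'I_N -> R) (W1 : 'M[R]_(d, m)) (w2 : 'I_m -> R) (lam : 'I_N -> R)
  (D : 'I_m -> 'I_N -> bool) (ip im : 'I_m) :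
  is_label y ->
  orthogonal_separable X y ->
  KKT_B X y W1 w2 lam D ->
  w2 ip != 0 -> w2 im != 0 ->
  (forall n, y n = 1 -> D ip n = true) ->
  (forall n, y n = -1 -> D im n = true) ->
  dual_feasible X lam.
Proof.
move=> Hlab Hos [Hsg [_ [_ [Hw2 [HD HW]]]]] Hp Hm HDp HDm u Hu.
have Hu2 : \sum_(k < d) u k ^+ 2 <= 1.
  have h0 : 0 <= \sum_(k < d) u k ^+ 2 by apply: sumr_ge0 => k _; exact: sqr_ge0.
  rewrite -(sqr_sqrtr h0); have := sqrtr_ge0 (\sum_(k < d) u k ^+ 2).
  move: Hu; set t := Num.sqrt _ => Ht Ht0.
  by rewrite expr2; have := mulr_ge0 Ht0 Ht0; rewrite -subr_ge0; nra.
have U1 := @upper _ _ _ _ _ _ _ _ _ Hlab Hos Hsg Hp (Hw2 ip) (fun n => proj2 (HD ip n)) (HW ip) HDp u Hu2.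
have U2 : \sum_(n < N) (- lam n) * relu (xdot X n u) <= 1.
  apply: (@upper R N d X (fun n => - y n) (fun n => - lam n) (- w2 im) (wcol W1 im) (D im)) => //.
  - by move=> n; case: (Hlab n) => ->; rewrite ?opprK; [right|left].
  - move=> n n'; case: (Hos n n') => h1 h2; split=> h.
      by apply: h1; apply: oppr_inj.
    by apply: h2 => h'; apply: h; rewrite h'.
  - by move=> n; rewrite mulrNN.
  - by rewrite oppr_eq0.
  - by rewrite (Hw2 im) -sumrN; apply: eq_bigr => n _; rewrite mulrN.
  - by move=> n; exact: (proj2 (HD im n)).
  - move=> k; rewrite /wcol (HW im k) mulNr -mulrN -sumrN; congr (_ * _).
    by apply: eq_bigr => n _; rewrite !mulrN opprK.
  - by move=> n h; apply: HDm; rewrite -[y n]opprK h.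
rewrite ler_norml U1 andbT.
move: U2; under eq_bigr do rewrite mulNr; rewrite sumrN; lra.
Qed.
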